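(* Let $N,L\geq1$ be integers, $\sigma_p^2>0$, $N_0>0$ and $\mathcal{Y}\geq0$. For a normalized threshold $\lambda'\geq0$ let $$P_d(\lambda')=Q_{NL}\!\left(\sqrt{\frac{2L\sigma_p^2\mathcal{Y}}{N_0}},\sqrt{\lambda'}\right),\qquad P_f(\lambda')=\frac{\Gamma\!\left(NL,\frac{\lambda'}{2}\right)}{\Gamma(NL)},$$ and define $$\mathrm{AUC}(\mathcal{Y})\triangleq-\int_0^\infty P_d(\lambda')\frac{\partial P_f(\lambda')}{\partial\lambda'}\,d\lambda'.$$ Then $$\mathrm{AUC}(\mathcal{Y})=1-\exp\!\left(-\frac{L\sigma_p^2\mathcal{Y}}{N_0}\right)\sum_{l=0}^{NL-1}\frac{(NL)_l}{l!\,2^{NL+l}}\,{}_1F_1\!\left(NL+l,NL;\frac{L\sigma_p^2\mathcal{Y}}{2N_0}\right).$$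
   Context: $Q_\nu(a,b)$ is the generalized $\nu$th-order Marcum $Q$-function, $Q_\nu(a,b)=a^{1-\nu}\int_b^\infty x^{\nu}\exp\!\left(-\frac{x^2+a^2}{2}\right)I_{\nu-1}(ax)\,dx$ (for $a=0$ it equals $\Gamma(\nu,b^2/2)/\Gamma(\nu)$). $\Gamma(\cdot,\cdot)$ is the upper incomplete Gamma function, $(x)_l=x(x+1)\cdots(x+l-1)$ is the Pochhammer symbol, and ${}_1F_1$ is Kummer's confluent hypergeometric function. *)

(* Defs.v *)
From Stdlib Require Import Reals Arith Factorial.
From Coquelicot Require Import Coquelicot.
Open Scope R_scope.

Definition upper_gamma (s : nat) (x : R) : R :=
  RInt_gen (fun t => t ^ (s - 1) * exp (- t)) (at_point x) (Rbar_locally p_infty).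

Definition Gamma_nat (s : nat) : R := upper_gamma s 0.

(* Modified Bessel function of the first kind of integer order n:
   I_n(x) = sum_k (x/2)^(2k+n) / (k! Gamma(k+n+1)),  Gamma(k+n+1) = (k+n)!. *)
Definition besselI (n : nat) (x : R) : R :=
  Series (fun k => (x / 2) ^ (2 * k + n) / (INR (fact k) * INR (fact (k + n)))).

Definition marcumQ (nu : nat) (a b : R) : R :=
  if Req_EM_T a 0 then upper_gamma nu (b ^ 2 / 2) / Gamma_nat nu
  else / a ^ (nu - 1) *
       RInt_gen (fun x => x ^ nu * exp (- (x ^ 2 + a ^ 2) / 2) * besselI (nu - 1) (a * x))
                (at_point b) (Rbar_locally p_infty).

Fixpoint pochhammer (x : R) (l : nat) : R :=
  match l with
  | O => 1
  | S l' => pochhammer x l' * (x + INR l')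
  end.

Definition hyp1F1 (a b z : R) : R :=
  Series (fun k => pochhammer a k / pochhammer b k * z ^ k / INR (fact k)).

Definition Pd (N L : nat) (sigp2 N0 Y lam : R) : R :=
  marcumQ (N * L) (sqrt (2 * INR L * sigp2 * Y / N0)) (sqrt lam).

Definition Pf (N L : nat) (lam : R) : R :=
  upper_gamma (N * L) (lam / 2) / Gamma_nat (N * L).

(* Main.v *)
Require Import Defs.
From Stdlib Require Import Reals Arith Factorial Lra Lia.
From Coquelicot Require Import Coquelicot.
Open Scope R_scope.

Fixpoint psum (K : nat) (x : R) : R :=
  match K with O => 0 | S k => psum k x + x ^ k / INR (fact k) end.

Definition E (K : nat) (x : R) : R := exp (- x) * psum K x.

Lemma INR_fact_pos k : 0 < INR (fact k).
Proof. apply lt_0_INR, lt_O_fact. Qed.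

Lemma INR_fact_neq0 k : INR (fact k) <> 0.
Proof. apply Rgt_not_eq, INR_fact_pos. Qed.

Lemma fact_S_INR k : INR (fact (S k)) = INR (S k) * INR (fact k).
Proof. change (fact (S k)) with ((S k) * fact k)%nat. apply mult_INR. Qed.

Lemma D_conv (f : R -> R) (x a b : R) : is_derive f x a -> a = b -> is_derive f x b.
Proof. intros H ->. exact H. Qed.

Lemma D_mult (f g : R -> R) x a b :
  is_derive f x a -> is_derive g x b -> is_derive (fun t => f t * g t) x (a * g x + f x * b).
Proof. intros Hf Hg. apply (is_derive_mult f g x a b Hf Hg). intros; apply Rmult_comm. Qed.

Lemma D_plus (f g : R -> R) x a b :
  is_derive f x a -> is_derive g x b -> is_derive (fun t => f t + g t) x (a + b).
Proof. intros Hf Hg. apply (is_derive_plus f g x a b Hf Hg). Qed.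

Lemma D_comp (f g : R -> R) x a b :
  is_derive f (g x) a -> is_derive g x b -> is_derive (fun t => f (g t)) x (b * a).
Proof. intros Hf Hg. apply (is_derive_comp f g x a b Hf Hg). Qed.

Lemma D_id (x : R) : is_derive (fun t : R => t) x 1.
Proof. apply (@is_derive_id R_AbsRing). Qed.

Lemma D_pow n x : is_derive (fun t => t ^ n) x (INR n * x ^ (pred n)).
Proof.
  eapply D_conv. apply (is_derive_pow (fun t => t) n x 1), D_id. ring.
Qed.

Lemma D_const (c x : R) : is_derive (fun _ => c) x 0.
Proof. apply (@is_derive_const R_AbsRing R_NormedModule). Qed.


Lemma D_expn x : is_derive (fun t => exp (- t)) x (- exp (- x)).
Proof.
  eapply D_conv. apply (D_comp exp (fun t => - t)). apply is_derive_exp.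
  apply (is_derive_opp (fun t => t) x 1), D_id. simpl. unfold opp; simpl. ring.
Qed.

Lemma pow_term_derive k x :
  is_derive (fun t => t ^ S k / INR (fact (S k))) x (x ^ k / INR (fact k)).
Proof.
  eapply D_conv. apply (D_mult (fun t => t ^ S k) (fun _ => / INR (fact (S k)))).
  apply D_pow. apply D_const.
  rewrite fact_S_INR. simpl pred.
  assert (INR (S k) <> 0) by (apply not_0_INR; lia).
  pose proof (INR_fact_neq0 k). field. split; auto.
Qed.

Lemma psum_derive k x : is_derive (psum (S k)) x (psum k x).
Proof.
  revert x. induction k as [|k IH]; intros x.
  - simpl. apply is_derive_ext with (f := fun _ => 1).
    + intros t. simpl. field.
    + apply D_const.
  - apply (D_plus (psum (S k)) (fun t => t ^ S k / INR (fact (S k)))).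
    apply IH. apply pow_term_derive.
Qed.

Lemma E_derive k x : is_derive (E (S k)) x (- exp (- x) * (x ^ k / INR (fact k))).
Proof.
  eapply D_conv. apply (D_mult (fun t => exp (- t)) (psum (S k))).
  apply D_expn. apply psum_derive. simpl. ring.
Qed.

Lemma psum_0 K : psum (S K) 0 = 1.
Proof.
  induction K as [|K IH]. simpl. field.
  change (psum (S (S K)) 0) with (psum (S K) 0 + 0 ^ S K / INR (fact (S K))).
  rewrite IH. rewrite pow_i by lia. field. apply INR_fact_neq0.
Qed.

Lemma E_0 K : E (S K) 0 = 1.
Proof. unfold E. rewrite psum_0, Ropp_0, exp_0. ring. Qed.

Lemma psum_nonneg K x : 0 <= x -> 0 <= psum K x.
Proof.
  intros Hx. induction K as [|K IH]; simpl. lra.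
  apply Rplus_le_le_0_compat; auto.
  apply Rmult_le_pos. apply pow_le; auto. left; apply Rinv_0_lt_compat, INR_fact_pos.
Qed.

Lemma E_nonneg K x : 0 <= x -> 0 <= E K x.
Proof. intros. unfold E. apply Rmult_le_pos. left; apply exp_pos. now apply psum_nonneg. Qed.

Lemma cont_of_derive (f : R -> R) (x d : R) : is_derive f x d -> continuous f x.
Proof. intros H. apply (@ex_derive_continuous R_AbsRing R_NormedModule). exists d. exact H. Qed.

Lemma exp_INR_mult n y : exp (INR n * y) = exp y ^ n.
Proof.
  induction n as [|n IH]. simpl. rewrite Rmult_0_l. apply exp_0.
  rewrite S_INR, Rmult_plus_distr_r, Rmult_1_l, exp_plus, IH. simpl. ring.
Qed.

Lemma powexp_bound j x : 0 < x ->
  x ^ j * exp (- x) <= INR (S j) ^ S j / x.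
Proof.
  intros Hx. set (m := S j). assert (Hm : 0 < INR m) by (apply lt_0_INR; unfold m; lia).
  set (y := x / INR m).
  assert (Hy : 0 < y) by (unfold y; apply Rdiv_lt_0_compat; auto).
  assert (Hex : exp x = exp y ^ m).
  { rewrite <- exp_INR_mult. f_equal. unfold y. field. lra. }
  assert (H1 : y ^ m <= exp x).
  { rewrite Hex. apply pow_incr. split. lra. pose proof (exp_ineq1_le y). lra. }
  assert (H2 : y ^ m = x ^ m / INR m ^ m).
  { unfold y, Rdiv. rewrite Rpow_mult_distr, pow_inv. reflexivity. }
  rewrite exp_Ropp.
  assert (Hex0 : 0 < exp x) by apply exp_pos.
  assert (Hxm : 0 < x ^ m) by (apply pow_lt; auto).
  assert (Hmm : 0 < INR m ^ m) by (apply pow_lt; auto).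
  apply Rmult_le_reg_r with (r := exp x * x / INR m ^ m).
  { apply Rdiv_lt_0_compat; auto. apply Rmult_lt_0_compat; auto. }
  replace (x ^ j * / exp x * (exp x * x / INR m ^ m)) with (x ^ m / INR m ^ m).
  2:{ change (x ^ m) with (x * x ^ j). field. repeat split; lra. }
  replace (INR m ^ m / x * (exp x * x / INR m ^ m)) with (exp x).
  2:{ field. split; lra. }
  lra.
Qed.

Lemma lim_powexp j : is_lim (fun x => x ^ j * exp (- x)) p_infty 0.
Proof.
  apply is_lim_spec. intros eps. simpl.
  set (C := INR (S j) ^ S j).
  assert (HC : 0 < C) by (apply pow_lt, lt_0_INR; lia).
  exists (Rmax 1 (C / eps)). intros x Hx.
  assert (Hx1 : 1 < x) by (eapply Rle_lt_trans; [apply Rmax_l|exact Hx]).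
  assert (Hx2 : C / eps < x) by (eapply Rle_lt_trans; [apply Rmax_r|exact Hx]).
  rewrite Rminus_0_r.
  assert (0 <= x ^ j * exp (- x)).
  { apply Rmult_le_pos. apply pow_le; lra. left; apply exp_pos. }
  rewrite Rabs_right by lra.
  eapply Rle_lt_trans. apply powexp_bound; lra. fold C.
  pose proof (cond_pos eps).
  apply Rmult_lt_reg_r with (r := x / eps). apply Rdiv_lt_0_compat; lra.
  replace (C / x * (x / eps)) with (C / eps) by (field; split; lra).
  replace (eps * (x / eps)) with x by (field; lra). lra.
Qed.

Lemma lim_E K : is_lim (E K) p_infty 0.
Proof.
  induction K as [|K IH].
  - unfold E. simpl. apply is_lim_ext with (f := fun _ => 0).
    intros; ring. apply is_lim_const.
  - apply is_lim_ext with (f := fun x => E K x + / INR (fact K) * (x ^ K * exp (- x))).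
    intros x. unfold E. simpl. field. apply INR_fact_neq0.
    replace (Finite 0) with (Finite (0 + / INR (fact K) * 0)) by (f_equal; ring).
    apply is_lim_plus'. exact IH.
    apply (is_lim_scal_l _ _ _ 0). apply lim_powexp.
Qed.

Notation GEN f b l := (is_RInt_gen f (at_point b) (Rbar_locally p_infty) l).

Lemma gen_to_ex (f : R -> R) (b l : R) : GEN f b l -> forall B, b <= B -> ex_RInt f b B.
Proof.
  intros H B HB.
  destruct (H (fun _ => True) (filter_forall _ (fun _ => I))) as [Q R HQ HR HP].
  destruct HR as [M HM].
  set (B' := Rmax (M + 1) B).
  destruct (HP b B' HQ) as [y [Hy _]].
  { apply HM. unfold B'. pose proof (Rmax_l (M+1) B). lra. }
  apply (ex_RInt_Chasles_1 f b B B'). split; auto. apply Rmax_r.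
  exists y. exact Hy.
Qed.

Lemma gen_to_lim (f : R -> R) (b l : R) : GEN f b l -> is_lim (fun B => RInt f b B) p_infty l.
Proof.
  intros H. apply is_lim_spec. intros eps.
  destruct (H (ball l eps) (locally_ball l eps)) as [Q R HQ HR HP].
  destruct HR as [M HM]. exists M. intros B HB.
  destruct (HP b B HQ (HM B HB)) as [y [Hy Hb]].
  simpl in Hy. rewrite (is_RInt_unique _ _ _ _ Hy). exact Hb.
Qed.

Lemma lim_to_gen (f : R -> R) (b l : R) :
  (forall B, b <= B -> ex_RInt f b B) -> is_lim (fun B => RInt f b B) p_infty l -> GEN f b l.
Proof.
  intros Hex Hl P HP.
  destruct (Hl P HP) as [M HM].
  apply Filter_prod with (Q := fun a => a = b) (R := fun B => Rmax M b < B).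
  - reflexivity.
  - exists (Rmax M b). auto.
  - intros x y -> Hy. exists (RInt f b y). split.
    + apply (RInt_correct f b y), Hex. pose proof (Rmax_r M b). simpl. lra.
    + apply HM. pose proof (Rmax_l M b). lra.
Qed.

Lemma filterlim_at_point_self (F : R -> R) b : filterlim F (at_point b) (locally (F b)).
Proof. intros P HP. apply (locally_singleton (F b) P HP). Qed.

Lemma gen_FTC (F f : R -> R) (b L : R) :
  (forall x, is_derive F x (f x)) -> (forall x, continuous f x) ->
  is_lim F p_infty L -> GEN f b (L - F b).
Proof.
  intros Hd Hc Hl.
  apply is_RInt_gen_ext with (f := Derive F).
  - apply filter_forall. intros ab x _. apply is_derive_unique, Hd.
  - apply is_RInt_gen_Derive.
    + apply filter_forall. intros ab x _. eexists; apply Hd.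
    + apply filter_forall. intros ab x _.
      apply continuous_ext with (f := f). intros t. symmetry. apply is_derive_unique, Hd.
      apply Hc.
    + apply filterlim_at_point_self.
    + exact Hl.
Qed.

Lemma upper_gamma_is k x :
  GEN (fun t => t ^ (S k - 1) * exp (- t)) x (INR (fact k) * E (S k) x).
Proof.
  replace (INR (fact k) * E (S k) x) with (0 - (- INR (fact k) * E (S k) x)) by ring.
  apply (gen_FTC (fun t => - INR (fact k) * E (S k) t)).
  - intros t. eapply D_conv. apply is_derive_scal, E_derive.
    replace (S k - 1)%nat with k by lia. field. apply INR_fact_neq0.
  - intros t. eapply cont_of_derive. replace (S k - 1)%nat with k by lia.
    apply (D_mult (fun t => t ^ k) (fun t => exp (- t))). apply D_pow. apply D_expn.
  - replace (Finite 0) with (Rbar_mult (- INR (fact k)) 0) by (simpl; f_equal; ring).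
    apply is_lim_scal_l, lim_E.
Qed.

Lemma upper_gamma_eq k x : upper_gamma (S k) x = INR (fact k) * E (S k) x.
Proof.
  unfold upper_gamma. apply is_RInt_gen_unique. apply upper_gamma_is.
Qed.

Lemma Gamma_nat_eq k : Gamma_nat (S k) = INR (fact k).
Proof. unfold Gamma_nat. rewrite upper_gamma_eq, E_0. ring. Qed.


Lemma series_lim (a : nat -> R) (l : R) : is_series a l -> is_lim_seq (sum_f_R0 a) l.
Proof.
  intros H. apply is_lim_seq_ext with (u := sum_n a).
  intros; apply sum_n_Reals. exact H.
Qed.

Lemma lim_series (a : nat -> R) (l : R) : is_lim_seq (sum_f_R0 a) l -> is_series a l.
Proof.
  intros H. apply is_lim_seq_ext with (v := sum_n a) in H.
  exact H. intros; symmetry; apply sum_n_Reals.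
Qed.

Lemma is_series_minus_R (a b : nat -> R) (la lb : R) :
  is_series a la -> is_series b lb -> is_series (fun n => a n - b n) (la - lb).
Proof.
  intros Ha Hb. apply lim_series. apply series_lim in Ha. apply series_lim in Hb.
  apply is_lim_seq_ext with (u := fun n => sum_f_R0 a n - sum_f_R0 b n).
  intros; rewrite minus_sum; reflexivity.
  apply is_lim_seq_minus'; auto.
Qed.

Lemma is_series_plus_R (a b : nat -> R) (la lb : R) :
  is_series a la -> is_series b lb -> is_series (fun n => a n + b n) (la + lb).
Proof.
  intros Ha Hb. apply lim_series. apply series_lim in Ha. apply series_lim in Hb.
  apply is_lim_seq_ext with (u := fun n => sum_f_R0 a n + sum_f_R0 b n).
  intros; rewrite plus_sum; reflexivity.
  apply is_lim_seq_plus'; auto.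
Qed.

Lemma is_series_scal_R (c : R) (a : nat -> R) (l : R) :
  is_series a l -> is_series (fun n => c * a n) (c * l).
Proof.
  intros Ha. apply lim_series. apply series_lim in Ha.
  apply is_lim_seq_ext with (u := fun n => c * sum_f_R0 a n).
  intros; rewrite scal_sum; apply sum_eq; intros; ring.
  apply (is_lim_seq_scal_l _ c (Finite l)) in Ha. exact Ha.
Qed.

Lemma sum_mono (a : nat -> R) M N : (forall n, 0 <= a n) -> (M <= N)%nat ->
  sum_f_R0 a M <= sum_f_R0 a N.
Proof.
  intros Ha HMN. induction HMN. lra. simpl. pose proof (Ha (S m)). lra.
Qed.

Lemma sum_nonneg (a : nat -> R) N : (forall n, 0 <= a n) -> 0 <= sum_f_R0 a N.
Proof.
  intros Ha. induction N; simpl. apply Ha. pose proof (Ha (S N)). lra.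
Qed.

Lemma partial_le (a : nat -> R) (l : R) : (forall n, 0 <= a n) -> is_series a l ->
  forall N, sum_f_R0 a N <= l.
Proof.
  intros Ha Hl N. apply series_lim in Hl.
  apply (is_lim_seq_incr_compare (sum_f_R0 a) l Hl). intros n. simpl.
  pose proof (Ha (S n)). lra.
Qed.

Lemma series_nonneg (a : nat -> R) (l : R) : (forall n, 0 <= a n) -> is_series a l -> 0 <= l.
Proof.
  intros Ha Hl. eapply Rle_trans. apply (sum_nonneg a 0 Ha). apply partial_le; auto.
Qed.

Lemma tail_lim (a : nat -> R) (l : R) : is_series a l -> is_lim_seq (fun N => l - sum_f_R0 a N) 0.
Proof.
  intros H. apply series_lim in H.
  replace (Finite 0) with (Rbar_minus l l) by (simpl; f_equal; ring).
  apply (is_lim_seq_minus _ _ l l). apply is_lim_seq_const. exact H. simpl. reflexivity.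
Qed.

Lemma is_RInt_sum_n (g : nat -> R -> R) (a b : R) (I : nat -> R) :
  (forall m, is_RInt (g m) a b (I m)) ->
  forall M, is_RInt (fun x => sum_n (fun m => g m x) M) a b (sum_n I M).
Proof.
  intros H M. induction M as [|M IH].
  - rewrite sum_O. apply is_RInt_ext with (f := g 0%nat).
    intros; rewrite sum_O; reflexivity. apply H.
  - rewrite sum_Sn. apply is_RInt_ext with (f := fun x => plus (sum_n (fun m => g m x) M) (g (S M) x)).
    intros; rewrite sum_Sn; reflexivity.
    apply (@is_RInt_plus R_NormedModule); auto.
Qed.

Lemma RInt_correct_R (f : R -> R) (a b : R) : ex_RInt f a b -> is_RInt f a b (RInt f a b).
Proof. apply (@RInt_correct R_CompleteNormedModule). Qed.

Definition clamp (b B x : R) := Rmax b (Rmin B x).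

Lemma clamp_in b B x : b <= B -> b <= clamp b B x <= B.
Proof.
  intros H. unfold clamp. split. apply Rmax_l.
  apply Rmax_lub. auto. apply Rmin_l.
Qed.

Lemma clamp_id b B x : b <= x <= B -> clamp b B x = x.
Proof.
  intros [H1 H2]. unfold clamp. rewrite Rmin_right by auto. rewrite Rmax_right; auto.
Qed.

Lemma finite_interchange (f : nat -> R -> R) (F : R -> R) (p : nat -> R) (b B W Sp : R) :
  b <= B ->
  (forall m x, b <= x <= B -> 0 <= f m x) ->
  (forall m x, b <= x <= B -> f m x <= p m * W) ->
  is_series p Sp ->
  (forall x, b <= x <= B -> is_series (fun m => f m x) (F x)) ->
  (forall m, ex_RInt (f m) b B) ->
  exists I, is_RInt F b B I /\ is_series (fun m => RInt (f m) b B) I.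
Proof.
  intros HbB H0 Hle Hp HF Hex.
  set (G := fun x => F (clamp b B x)).
  set (S := fun M x => sum_n (fun m => f m (clamp b B x)) M).
  assert (HS : forall M, is_RInt (S M) b B (sum_n (fun m => RInt (f m) b B) M)).
  { intros M. apply is_RInt_sum_n. intros m.
    apply is_RInt_ext with (f := f m).
    intros x Hx. rewrite Rmin_left in Hx by auto. rewrite Rmax_right in Hx by auto.
    rewrite clamp_id; auto. lra.
    apply RInt_correct_R, Hex. }
  assert (Hbound : forall M y, b <= y <= B ->
    0 <= F y - sum_f_R0 (fun m => f m y) M <= W * (Sp - sum_f_R0 p M)).
  { intros M y Hy. split.
    - assert (sum_f_R0 (fun m => f m y) M <= F y).
      { apply partial_le. intros; apply H0; auto. apply HF; auto. }
      lra.
    - assert (Hs : is_series (fun m => p m * W - f m y) (Sp * W - F y)).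
      { apply (is_series_minus_R (fun m => p m * W) (fun m => f m y)). apply is_series_ext with (a := fun m => W * p m).
        intros; apply Rmult_comm. replace (Sp * W) with (W * Sp) by ring. apply is_series_scal_R; auto.
        apply HF; auto. }
      pose proof (partial_le _ _ (fun m => Rge_le _ _ (Rge_minus _ _ (Rle_ge _ _ (Hle m y Hy)))) Hs M) as HH.
      rewrite minus_sum in HH.
      replace (sum_f_R0 (fun i => p i * W) M) with (W * sum_f_R0 p M) in HH.
      lra. rewrite scal_sum. apply sum_eq; intros; ring. }
  assert (Hlim : filterlim S eventually (locally (G : fct_UniformSpace R R_CompleteNormedModule))).
  { intros P [eps HP].
    pose proof (tail_lim p Sp Hp) as Ht.
    apply (is_lim_seq_scal_l _ W (Finite 0)) in Ht.
    simpl in Ht. rewrite Rmult_0_r in Ht.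
    apply is_lim_seq_spec in Ht. destruct (Ht eps) as [N0 HN0].
    exists N0. intros M HM. apply HP. intros t.
    pose proof (HN0 M HM) as HH. rewrite Rminus_0_r in HH.
    pose proof (Hbound M (clamp b B t) (clamp_in b B t HbB)) as Hb.
    change (Rabs (S M t - G t) < eps).
    unfold S, G. rewrite sum_n_Reals.
    rewrite Rabs_minus_sym, Rabs_right by lra.
    eapply Rle_lt_trans. apply Hb. eapply Rle_lt_trans. apply Rle_abs. exact HH. }
  destruct (filterlim_RInt S b B eventually eventually_filter G
              (fun M => sum_n (fun m => RInt (f m) b B) M) HS Hlim) as [If [HIf HG]].
  exists If. split.
  - apply is_RInt_ext with (f := G). intros x Hx.
    rewrite Rmin_left in Hx by auto. rewrite Rmax_right in Hx by auto.
    unfold G. rewrite clamp_id; auto. lra. exact HG.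
  - exact HIf.
Qed.

Lemma lim_finite_sum (g : nat -> R -> R) (l : nat -> R) N :
  (forall m, is_lim (g m) p_infty (l m)) ->
  is_lim (fun B => sum_f_R0 (fun m => g m B) N) p_infty (sum_f_R0 l N).
Proof.
  intros H. induction N as [|N IH]; simpl. apply H.
  apply is_lim_plus'; auto.
Qed.

Lemma RInt_Chasles_R (f : R -> R) a b c :
  ex_RInt f a b -> ex_RInt f b c -> RInt f a b + RInt f b c = RInt f a c.
Proof. intros H1 H2. apply (@RInt_Chasles R_CompleteNormedModule); auto. Qed.

Lemma gen_mono (f : R -> R) (b v B : R) :
  (forall x, b <= x -> 0 <= f x) -> GEN f b v -> b <= B -> 0 <= RInt f b B <= v.
Proof.
  intros H0 Hg HB.
  assert (Hex := gen_to_ex f b v Hg).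
  split.
  - apply RInt_ge_0; auto. intros; apply H0; lra.
  - pose proof (gen_to_lim f b v Hg) as Hl.
    assert (Rbar_le (RInt f b B) v).
    { apply (is_lim_le_loc (fun _ => RInt f b B) (fun B' => RInt f b B') p_infty).
      - exists B. intros B' HB'.
        rewrite <- (RInt_Chasles_R f b B B'); auto.
        assert (0 <= RInt f B B').
        { apply RInt_ge_0. lra. apply (ex_RInt_Chasles_2 f b B B'). lra. apply Hex; lra.
          intros; apply H0; lra. }
        lra.
        apply (ex_RInt_Chasles_2 f b B B'). lra. apply Hex; lra.
      - apply is_lim_const.
      - exact Hl. }
    exact H.
Qed.

Lemma interchange (f : nat -> R -> R) (F w : R -> R) (p v : nat -> R) (b V Sp : R) :
  (forall m x, b <= x -> 0 <= f m x) ->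
  (forall m x, b <= x -> f m x <= p m * w x) ->
  (forall m, 0 <= p m) -> is_series p Sp ->
  (forall B, exists W, forall x, b <= x <= B -> w x <= W) ->
  (forall x, b <= x -> is_series (fun m => f m x) (F x)) ->
  (forall m, GEN (f m) b (v m)) ->
  is_series v V ->
  GEN F b V.
Proof.
  intros H0 Hle Hp0 Hp Hw HF Hv HV.
  assert (Hfin : forall B, b <= B ->
    exists I, is_RInt F b B I /\ is_series (fun m => RInt (f m) b B) I).
  { intros B HB. destruct (Hw B) as [W HW].
    apply (finite_interchange f F p b B W Sp HB).
    - intros; apply H0; lra.
    - intros m x Hx. apply Rle_trans with (p m * w x). apply Hle; lra.
      apply Rmult_le_compat_l. apply Hp0. apply HW; lra.
    - exact Hp.
    - intros; apply HF; lra.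
    - intros m. apply (gen_to_ex _ _ _ (Hv m)). lra. }
  apply lim_to_gen.
  - intros B HB. destruct (Hfin B HB) as [I [HI _]]. exists I; exact HI.
  - apply is_lim_spec. intros eps.
    pose proof (cond_pos eps) as Heps.
    set (e := fun m B => RInt (f m) b B).
    assert (He : forall m B, b <= B -> 0 <= e m B <= v m).
    { intros m B HB. apply (gen_mono (f m) b (v m) B); auto. }
    pose proof (tail_lim v V HV) as Ht. apply is_lim_seq_spec in Ht.
    destruct (Ht (mkposreal (eps/2) (Rdiv_lt_0_compat _ _ Heps Rlt_0_2))) as [N0 HN0].
    pose proof (HN0 N0 (Nat.le_refl _)) as HN0'. simpl in HN0'. rewrite Rminus_0_r in HN0'.
    assert (HD : is_lim (fun B => sum_f_R0 (fun m => v m - e m B) N0) p_infty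
                        (sum_f_R0 (fun m => 0) N0)).
    { apply lim_finite_sum. intros m.
      replace (Finite 0) with (Finite (v m - v m)) by (f_equal; ring).
      apply is_lim_minus'. apply is_lim_const. apply gen_to_lim, Hv. }
    rewrite sum_cte, Rmult_0_l in HD.
    apply is_lim_spec in HD. destruct (HD (mkposreal (eps/2) (Rdiv_lt_0_compat _ _ Heps Rlt_0_2))) as [M1 HM1].
    exists (Rmax M1 b). intros B HB.
    assert (HB1 : M1 < B) by (pose proof (Rmax_l M1 b); lra).
    assert (HB2 : b <= B) by (pose proof (Rmax_r M1 b); lra).
    destruct (Hfin B HB2) as [I [HI HIs]].
    rewrite (is_RInt_unique _ _ _ _ HI).
    pose proof (HM1 B HB1) as HDB. simpl in HDB. rewrite Rminus_0_r in HDB.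
    assert (Hs : is_series (fun m => v m - e m B) (V - I)).
    { apply is_series_minus_R; auto. }
    assert (Hpos : 0 <= V - I).
    { apply (series_nonneg _ _ (fun m => Rge_le _ _ (Rge_minus _ _ (Rle_ge _ _ (proj2 (He m B HB2))))) Hs). }
    assert (Hup : V - I <= sum_f_R0 (fun m => v m - e m B) N0 + (V - sum_f_R0 v N0)).
    { pose proof (series_lim _ _ Hs) as Hl.
      assert (Rbar_le (V - I) (sum_f_R0 (fun m => v m - e m B) N0 + (V - sum_f_R0 v N0))).
      { apply (is_lim_seq_le_loc (sum_f_R0 (fun m => v m - e m B)) (fun _ => sum_f_R0 (fun m => v m - e m B) N0 + (V - sum_f_R0 v N0)) _ _ ).
        - exists N0. intros N HN.
          rewrite !minus_sum.
          assert (sum_f_R0 (fun m => e m B) N0 <= sum_f_R0 (fun m => e m B) N).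
          { apply sum_mono; auto. intros; apply He; auto. }
          assert (sum_f_R0 v N <= V).
          { apply partial_le; auto. intros m. pose proof (He m B HB2). lra. }
          lra.
        - exact Hl.
        - apply is_lim_seq_const. }
      exact H. }
    rewrite Rabs_minus_sym, Rabs_right by lra.
    pose proof (Rle_abs (sum_f_R0 (fun m => v m - e m B) N0)).
    pose proof (Rle_abs (V - sum_f_R0 v N0)). lra.
Qed.

Lemma exp_series (c : R) : is_series (fun m => c ^ m / INR (fact m)) (exp c).
Proof.
  pose proof (is_exp_Reals c) as H. unfold is_pseries in H.
  apply is_series_ext with (a := fun k => scal (pow_n c k) (/ INR (fact k))).
  intros m. rewrite pow_n_pow. reflexivity. exact H.
Qed.

Lemma psum_sum K x : psum (S K) x = sum_f_R0 (fun j => x ^ j / INR (fact j)) K.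
Proof. induction K as [|K IH]. simpl. ring. change (psum (S (S K)) x) with (psum (S K) x + x ^ S K / INR (fact (S K))).
  rewrite IH. reflexivity. Qed.

Lemma term_le_exp y j : 0 <= y -> y ^ j / INR (fact j) <= exp y.
Proof.
  intros Hy.
  assert (Hn : forall m, 0 <= y ^ m / INR (fact m)).
  { intros; apply Rmult_le_pos. apply pow_le; auto. left; apply Rinv_0_lt_compat, INR_fact_pos. }
  eapply Rle_trans. 2: apply (partial_le _ _ Hn (exp_series y) j).
  destruct j. simpl; lra. cbn [sum_f_R0].
  assert (0 <= sum_f_R0 (fun m => y ^ m / INR (fact m)) j) by (apply sum_nonneg; auto).
  lra.
Qed.

Lemma psum_le_exp K x : 0 <= x -> psum K x <= exp x.
Proof.
  intros Hx. destruct K. simpl. left; apply exp_pos.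
  rewrite psum_sum. apply partial_le. 2: apply exp_series.
  intros; apply Rmult_le_pos. apply pow_le; auto. left; apply Rinv_0_lt_compat, INR_fact_pos.
Qed.

Lemma E_le_1 K x : 0 <= x -> E K x <= 1.
Proof.
  intros Hx. unfold E. replace 1 with (exp (- x) * exp x).
  apply Rmult_le_compat_l. left; apply exp_pos. apply psum_le_exp; auto.
  rewrite <- exp_plus. replace (- x + x) with 0 by ring. apply exp_0.
Qed.

Lemma lim_sq2 : is_lim (fun x => x ^ 2 / 2) p_infty p_infty.
Proof.
  apply is_lim_spec. intros M. exists (Rmax 2 M). intros x Hx.
  pose proof (Rmax_l 2 M). pose proof (Rmax_r 2 M).
  assert (x <= x ^ 2 / 2) by (simpl; nra). lra.
Qed.

Lemma lim_lin (a : R) : 0 < a -> is_lim (fun x => a * x) p_infty p_infty.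
Proof.
  intros Ha. apply is_lim_spec. intros M. exists (M / a). intros x Hx.
  apply Rmult_lt_compat_l with (r := a) in Hx; auto.
  replace (a * (M / a)) with M in Hx by (field; lra). lra.
Qed.

Lemma lim_E_comp K (g : R -> R) : is_lim g p_infty p_infty -> is_lim (fun x => E K (g x)) p_infty 0.
Proof.
  intros Hg. apply (is_lim_comp (E K) g p_infty 0 p_infty). apply lim_E. exact Hg.
  exists 0. intros; discriminate.
Qed.

Lemma pm_series (c : R) : is_series (fun m => exp (- c) * (c ^ m / INR (fact m))) 1.
Proof.
  replace 1 with (exp (- c) * exp c).
  apply is_series_scal_R, exp_series.
  rewrite <- exp_plus. replace (- c + c) with 0 by ring. apply exp_0.
Qed.

Definition pm (c : R) (m : nat) : R := exp (- c) * (c ^ m / INR (fact m)).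

Definition chi (j : nat) (x : R) : R :=
  x ^ (2 * j + 1) * exp (- (x ^ 2 / 2)) / (2 ^ j * INR (fact j)).

Lemma pm_nonneg c m : 0 <= c -> 0 <= pm c m.
Proof.
  intros Hc. unfold pm. apply Rmult_le_pos. left; apply exp_pos.
  apply Rmult_le_pos. apply pow_le; auto. left; apply Rinv_0_lt_compat, INR_fact_pos.
Qed.

Lemma GEN_scal (f : R -> R) (a b l : R) : GEN f b l -> GEN (fun x => a * f x) b (a * l).
Proof.
  intros H. apply (is_RInt_gen_scal f a l) in H. exact H.
Qed.

Lemma sq_half_pow x j : (x ^ 2 / 2) ^ j = x ^ (2 * j) / 2 ^ j.
Proof.
  unfold Rdiv. rewrite Rpow_mult_distr, pow_mult, pow_inv. reflexivity.
Qed.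

Lemma chi_alt j x : chi j x = x * exp (- (x ^ 2 / 2)) * ((x ^ 2 / 2) ^ j / INR (fact j)).
Proof.
  unfold chi. rewrite sq_half_pow. rewrite pow_add. simpl (x ^ 1).
  pose proof (INR_fact_neq0 j). assert (2 ^ j <> 0) by (apply pow_nonzero; lra).
  field. auto.
Qed.

Lemma chi_derive j x : is_derive (fun t => - E (S j) (t ^ 2 / 2)) x (chi j x).
Proof.
  eapply D_conv.
  apply (is_derive_opp (fun t => E (S j) (t ^ 2 / 2))).
  apply (D_comp (E (S j)) (fun t => t ^ 2 / 2)). apply E_derive.
  apply (D_mult (fun t => t ^ 2) (fun _ => / 2)). apply D_pow. apply D_const.
  rewrite chi_alt. unfold opp; simpl. field. apply INR_fact_neq0.
Qed.

Lemma chi_cont j x : continuous (chi j) x.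
Proof.
  eapply cont_of_derive. unfold chi.
  apply (D_mult (fun t => t ^ (2 * j + 1) * exp (- (t ^ 2 / 2))) (fun _ => / (2 ^ j * INR (fact j)))).
  apply (D_mult (fun t => t ^ (2 * j + 1)) (fun t => exp (- (t ^ 2 / 2)))).
  apply D_pow.
  apply (D_comp (fun t => exp (- t)) (fun t => t ^ 2 / 2)). apply D_expn.
  apply (D_mult (fun t => t ^ 2) (fun _ => / 2)). apply D_pow. apply D_const.
  apply D_const.
Qed.

Lemma chi_gen j b : GEN (chi j) b (E (S j) (b ^ 2 / 2)).
Proof.
  replace (E (S j) (b ^ 2 / 2)) with (0 - (- E (S j) (b ^ 2 / 2))) by ring.
  apply (gen_FTC (fun t => - E (S j) (t ^ 2 / 2))).
  - apply chi_derive.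
  - apply chi_cont.
  - replace (Finite 0) with (Rbar_mult (-1) 0) by (simpl; f_equal; ring).
    apply is_lim_ext with (f := fun t => (-1) * E (S j) (t ^ 2 / 2)). intros; ring.
    apply is_lim_scal_l. apply lim_E_comp, lim_sq2.
Qed.

Lemma chi_bounds j x : 0 <= x -> 0 <= chi j x <= x.
Proof.
  intros Hx. rewrite chi_alt. set (y := x ^ 2 / 2).
  assert (Hy : 0 <= y) by (unfold y; apply Rmult_le_pos; [apply pow_le; auto | lra]).
  pose proof (term_le_exp y j Hy) as Ht.
  assert (0 <= y ^ j / INR (fact j)).
  { apply Rmult_le_pos. apply pow_le; auto. left; apply Rinv_0_lt_compat, INR_fact_pos. }
  pose proof (exp_pos (- y)).
  split.
  - apply Rmult_le_pos; [apply Rmult_le_pos; lra | lra].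
  - replace x with (x * exp (- y) * exp y) at 2.
    apply Rmult_le_compat_l. apply Rmult_le_pos; lra. exact Ht.
    rewrite Rmult_assoc, <- exp_plus. replace (- y + y) with 0 by ring. rewrite exp_0; ring.
Qed.

Definition bt (k : nat) (y : R) (i : nat) : R :=
  (y / 2) ^ (2 * i + k) / (INR (fact i) * INR (fact (i + k))).

Lemma bessel_series k y : 0 <= y -> is_series (bt k y) (besselI k y).
Proof.
  intros Hy. unfold besselI. fold (bt k y).
  apply Series_correct.
  apply (ex_series_le (bt k y) (fun i => (y / 2) ^ k * (((y / 2) ^ 2) ^ i / INR (fact i)))).
  - intros i. change (norm (bt k y i)) with (Rabs (bt k y i)).
    unfold bt. assert (Hy2 : 0 <= y / 2) by lra.
    pose proof (INR_fact_pos i). pose proof (INR_fact_pos (i + k)).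
    assert (1 <= INR (fact (i + k))).
    { apply (le_INR 1). pose proof (lt_O_fact (i + k)). lia. }
    rewrite Rabs_pos_eq.
    2:{ apply Rmult_le_pos. apply pow_le; auto. left; apply Rinv_0_lt_compat, Rmult_lt_0_compat; auto. }
    rewrite pow_add, <- pow_mult.
    assert (0 <= (y/2) ^ (2 * i)) by (apply pow_le; auto).
    assert (0 <= (y/2) ^ k) by (apply pow_le; auto).
    set (A := (y / 2) ^ k * ((y / 2) ^ (2 * i) / INR (fact i))).
    assert (HA : 0 <= A).
    { unfold A. apply Rmult_le_pos; auto. apply Rmult_le_pos; auto. left; apply Rinv_0_lt_compat; auto. }
    replace ((y / 2) ^ (2 * i) * (y / 2) ^ k / (INR (fact i) * INR (fact (i + k))))
      with (A * / INR (fact (i + k))) by (unfold A; field; lra).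
    fold A.
    rewrite <- (Rmult_1_r A) at 2.
    apply Rmult_le_compat_l; auto.
    rewrite <- Rinv_1. apply Rinv_le_contravar; lra.
  - exists ((y / 2) ^ k * exp ((y / 2) ^ 2)). apply is_series_scal_R, exp_series.
Qed.

Lemma bessel_identity k c a x i : 0 < a -> a ^ 2 = 2 * c ->
  x ^ S k * exp (- (x ^ 2 + a ^ 2) / 2) * bt k (a * x) i = a ^ k * (pm c i * chi (k + i) x).
Proof.
  intros Ha Ha2. unfold bt, pm, chi.
  replace (- (x ^ 2 + a ^ 2) / 2) with (- (x ^ 2 / 2) + - c) by (rewrite Ha2; field).
  rewrite exp_plus.
  replace (2 * (k + i) + 1)%nat with (S k + (2 * i + k))%nat by lia.
  replace (fact (i + k)) with (fact (k + i)) by (f_equal; lia).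
  replace ((a * x / 2) ^ (2 * i + k)) with (a ^ (2 * i) * a ^ k * x ^ (2 * i + k) / (2 ^ (2 * i) * 2 ^ k)).
  2:{ unfold Rdiv. rewrite !Rpow_mult_distr, pow_inv, !pow_add. field. split; apply pow_nonzero; lra. }
  rewrite !pow_add, !pow_mult, Ha2, Rpow_mult_distr.
  replace ((2 ^ 2) ^ i) with (2 ^ i * 2 ^ i) by (rewrite <- Rpow_mult_distr; f_equal; ring).
  pose proof (INR_fact_neq0 i). pose proof (INR_fact_neq0 (k + i)).
  assert (2 ^ i <> 0) by (apply pow_nonzero; lra).
  assert (2 ^ k <> 0) by (apply pow_nonzero; lra).
  field. auto.
Qed.

Lemma ex_series_pmE (c : R) (g : nat -> R) : 0 <= c -> (forall m, 0 <= g m <= 1) ->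
  ex_series (fun m => pm c m * g m).
Proof.
  intros Hc Hg. apply (@ex_series_le R_AbsRing R_CompleteNormedModule _ (pm c)).
  - intros m. change (norm (pm c m * g m)) with (Rabs (pm c m * g m)).
    pose proof (pm_nonneg c m Hc). pose proof (Hg m).
    rewrite Rabs_pos_eq by (apply Rmult_le_pos; lra).
    rewrite <- (Rmult_1_r (pm c m)) at 2. apply Rmult_le_compat_l; lra.
  - exists 1. apply pm_series.
Qed.

Lemma E_01 K x : 0 <= x -> 0 <= E K x <= 1.
Proof. intros; split; [apply E_nonneg | apply E_le_1]; auto. Qed.

Lemma marcum_series k c lam : 0 <= c -> 0 <= lam ->
  is_series (fun m => pm c m * E (S (k + m)) (lam / 2)) (marcumQ (S k) (sqrt (2 * c)) (sqrt lam)).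
Proof.
  intros Hc Hl.
  assert (Hsq : sqrt lam ^ 2 / 2 = lam / 2).
  { simpl. rewrite Rmult_1_r, sqrt_sqrt; auto. }
  assert (Hex : ex_series (fun m => pm c m * E (S (k + m)) (lam / 2))).
  { apply ex_series_pmE; auto. intros; apply E_01; lra. }
  unfold marcumQ. destruct (Req_EM_T (sqrt (2 * c)) 0) as [Ha0|Ha0].
  - apply sqrt_eq_0 in Ha0; [|lra]. assert (c = 0) by lra. subst c.
    rewrite Hsq, upper_gamma_eq, Gamma_nat_eq.
    apply lim_series.
    apply is_lim_seq_ext with (u := fun _ => INR (fact k) * E (S k) (lam / 2) / INR (fact k)).
    + intros N. induction N as [|N IH].
      * simpl. unfold pm. rewrite Nat.add_0_r, Ropp_0, exp_0. replace (0 ^ 0 / INR (fact 0)) with 1 by (simpl; field). field. apply INR_fact_neq0.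
      * cbn [sum_f_R0]. rewrite <- IH. unfold pm. rewrite pow_i by lia. replace (0 / INR (fact (S N))) with 0 by (unfold Rdiv; ring). rewrite Rmult_0_r, Rmult_0_l, Rplus_0_r. reflexivity.
    + apply is_lim_seq_const.
  - set (a := sqrt (2 * c)) in *.
    assert (Ha : 0 < a) by (pose proof (sqrt_pos (2 * c)); unfold a in *; lra).
    assert (Ha2 : a ^ 2 = 2 * c).
    { unfold a. rewrite <- Rsqr_pow2, Rsqr_sqrt; lra. }
    set (S0 := Series (fun m => pm c m * E (S (k + m)) (lam / 2))).
    assert (HS0 : is_series (fun m => pm c m * E (S (k + m)) (lam / 2)) S0) by (apply Series_correct; auto).
    replace (S k - 1)%nat with k by lia.
    assert (Hg : GEN (fun x => x ^ S k * exp (- (x ^ 2 + a ^ 2) / 2) * besselI k (a * x))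
                     (sqrt lam) (a ^ k * S0)).
    { apply (interchange (fun m x => a ^ k * (pm c m * chi (k + m) x)) _ (fun x => x)
               (fun m => a ^ k * pm c m) (fun m => a ^ k * (pm c m * E (S (k + m)) (lam / 2)))
               (sqrt lam) (a ^ k * S0) (a ^ k * 1)).
      - intros m x Hx. pose proof (sqrt_pos lam).
        apply Rmult_le_pos. apply pow_le; lra. apply Rmult_le_pos. apply pm_nonneg; auto.
        apply chi_bounds; lra.
      - intros m x Hx. pose proof (sqrt_pos lam).
        rewrite Rmult_assoc. apply Rmult_le_compat_l. apply pow_le; lra.
        apply Rmult_le_compat_l. apply pm_nonneg; auto. apply chi_bounds; lra.
      - intros m. apply Rmult_le_pos. apply pow_le; lra. apply pm_nonneg; auto.
      - apply is_series_scal_R, pm_series.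
      - intros B. exists B. intros; lra.
      - intros x Hx. pose proof (sqrt_pos lam).
        apply is_series_ext with (a := fun i => x ^ S k * exp (- (x ^ 2 + a ^ 2) / 2) * bt k (a * x) i).
        intros i. apply bessel_identity; auto.
        apply is_series_scal_R, bessel_series. apply Rmult_le_pos; lra.
      - intros m. apply GEN_scal. apply GEN_scal. rewrite <- Hsq. apply chi_gen.
      - apply is_series_scal_R; auto. }
    rewrite (is_RInt_gen_unique _ _ Hg).
    replace (/ a ^ k * (a ^ k * S0)) with S0. exact HS0.
    field. apply pow_nonzero; lra.
Qed.

Definition gk (k : nat) (lam : R) : R := exp (- (lam / 2)) * (lam / 2) ^ k / (2 * INR (fact k)).

Definition cc (j i : nat) : R := INR (fact (j + i)) / (INR (fact j) * INR (fact i) * 2 ^ S (j + i)).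

Definition Phi (j k : nat) (x : R) : R :=
  E (S j) x * (1 - E (S k) x) - E (S j) x + sum_f_R0 (fun i => cc j i * E (S (j + i)) (2 * x)) k.

Lemma D_sum (h : nat -> R -> R) (d : nat -> R) (x : R) N :
  (forall i, is_derive (h i) x (d i)) ->
  is_derive (fun t => sum_f_R0 (fun i => h i t) N) x (sum_f_R0 d N).
Proof.
  intros H. induction N as [|N IH]; simpl. apply H.
  apply (D_plus (fun t => sum_f_R0 (fun i => h i t) N) (h (S N))); auto.
Qed.

Lemma sum_scal_l (c : R) (a : nat -> R) N : sum_f_R0 (fun i => c * a i) N = c * sum_f_R0 a N.
Proof. induction N as [|N IH]; simpl. ring. rewrite IH. ring. Qed.

Lemma Phi_derive j k (x : R) : is_derive (Phi j k) x (E (S j) x * (exp (- x) * (x ^ k / INR (fact k)))).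
Proof.
  unfold Phi. eapply D_conv.
  apply (D_plus (fun t => E (S j) t * (1 - E (S k) t) - E (S j) t)
                (fun t => sum_f_R0 (fun i => cc j i * E (S (j + i)) (2 * t)) k)).
  apply (D_plus (fun t => E (S j) t * (1 - E (S k) t)) (fun t => - E (S j) t)).
  apply (D_mult (E (S j)) (fun t => 1 - E (S k) t)). apply E_derive.
  apply (D_plus (fun _ => 1) (fun t => - E (S k) t)). apply D_const.
  apply (is_derive_opp (E (S k))). apply E_derive.
  apply (is_derive_opp (E (S j))). apply E_derive.
  apply D_sum. intros i. apply is_derive_scal.
  apply (D_comp (E (S (j + i))) (fun t => 2 * t)). apply E_derive.
  apply is_derive_scal. apply D_id.
  unfold opp; simpl.
  assert (Hs : sum_f_R0 (fun i => cc j i * (2 * 1 * (- exp (- (2 * x)) * ((2 * x) ^ (j + i) / INR (fact (j + i)))))) k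
             = - (exp (- x) * (x ^ j / INR (fact j))) * (exp (- x) * sum_f_R0 (fun i => x ^ i / INR (fact i)) k)).
  { rewrite <- sum_scal_l, <- sum_scal_l. apply sum_eq. intros i _.
    unfold cc. rewrite Rpow_mult_distr, pow_add.
    replace (- (2 * x)) with (- x + - x) by ring. rewrite exp_plus.
    change (2 ^ S (j + i)) with (2 * 2 ^ (j + i)). rewrite pow_add.
    pose proof (INR_fact_neq0 i). pose proof (INR_fact_neq0 j). pose proof (INR_fact_neq0 (j + i)).
    assert (2 ^ i <> 0) by (apply pow_nonzero; lra).
    assert (2 ^ j <> 0) by (apply pow_nonzero; lra).
    rewrite !pow_add. field. repeat split; auto. }
  rewrite Hs. unfold E. rewrite !psum_sum. ring.
Qed.

Lemma lim_half : is_lim (fun x => x / 2) p_infty p_infty.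
Proof.
  apply is_lim_ext with (f := fun x => / 2 * x). intros; unfold Rdiv; ring.
  apply lim_lin. lra.
Qed.

Lemma Phi_lim j k : is_lim (Phi j k) p_infty 0.
Proof.
  unfold Phi.
  assert (H1 := lim_E (S j)). assert (H2 := lim_E (S k)).
  assert (H3 : is_lim (fun x => sum_f_R0 (fun i => cc j i * E (S (j + i)) (2 * x)) k) p_infty
                      (sum_f_R0 (fun i => cc j i * 0) k)).
  { apply (lim_finite_sum (fun i x => cc j i * E (S (j + i)) (2 * x)) (fun i => cc j i * 0)).
    intros i. apply (is_lim_scal_l _ (cc j i) p_infty 0). apply lim_E_comp, lim_lin. lra. }
  replace (Finite 0) with (Finite (0 * (1 - 0) - 0 + sum_f_R0 (fun i => cc j i * 0) k)).
  2:{ f_equal. rewrite (sum_eq _ (fun _ => 0)) by (intros; ring). rewrite sum_cte. ring. }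
  apply is_lim_plus'; auto. apply is_lim_minus'; auto.
  apply (is_lim_mult (E (S j)) (fun x => 1 - E (S k) x) p_infty 0 (1 - 0)); auto.
  apply is_lim_minus'; auto. apply is_lim_const. simpl. auto.
Qed.

Lemma Phi_0 j k : Phi j k 0 = sum_f_R0 (cc j) k - 1.
Proof.
  unfold Phi. rewrite Rmult_0_r, !E_0.
  rewrite (sum_eq (fun i => cc j i * E (S (j + i)) 0) (cc j)). ring.
  intros i _. rewrite E_0. ring.
Qed.

Lemma integrand_derive j k (lam : R) : exists d, is_derive (fun l => E (S j) (l / 2) * gk k l) lam d.
Proof.
  eexists. unfold gk.
  apply (D_mult (fun l => E (S j) (l / 2)) (fun l => exp (- (l / 2)) * (l / 2) ^ k / (2 * INR (fact k)))).
  apply (D_comp (E (S j)) (fun l => l / 2)). apply E_derive.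
  apply (D_mult (fun t => t) (fun _ => / 2)). apply D_id. apply D_const.
  apply (D_mult (fun l => exp (- (l / 2)) * (l / 2) ^ k) (fun _ => / (2 * INR (fact k)))).
  apply (D_mult (fun l => exp (- (l / 2))) (fun l => (l / 2) ^ k)).
  apply (D_comp (fun t => exp (- t)) (fun l => l / 2)). apply D_expn.
  apply (D_mult (fun t => t) (fun _ => / 2)). apply D_id. apply D_const.
  apply (D_comp (fun t => t ^ k) (fun l => l / 2)). apply D_pow.
  apply (D_mult (fun t => t) (fun _ => / 2)). apply D_id. apply D_const.
  apply D_const.
Qed.

Lemma T_gen j k : GEN (fun lam => E (S j) (lam / 2) * gk k lam) 0 (1 - sum_f_R0 (cc j) k).
Proof.
  replace (1 - sum_f_R0 (cc j) k) with (0 - Phi j k (0 / 2)).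
  2:{ replace (0 / 2) with 0 by field. rewrite Phi_0. ring. }
  apply (gen_FTC (fun lam => Phi j k (lam / 2))).
  - intros lam. eapply D_conv.
    apply (D_comp (Phi j k) (fun l => l / 2)). apply Phi_derive.
    apply (D_mult (fun t => t) (fun _ => / 2)). apply D_id. apply D_const.
    unfold gk. field. apply INR_fact_neq0.
  - intros lam. destruct (integrand_derive j k lam) as [d Hd]. eapply cont_of_derive. exact Hd.
  - apply (is_lim_comp (Phi j k) (fun l => l / 2) p_infty 0 p_infty). apply Phi_lim. apply lim_half.
    exists 0. intros; discriminate.
Qed.

Lemma poch_fact a l : pochhammer (INR (S a)) l = INR (fact (a + l)) / INR (fact a).
Proof.
  induction l as [|l IH].
  - simpl. rewrite Nat.add_0_r. field. apply INR_fact_neq0.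
  - change (pochhammer (INR (S a)) (S l)) with (pochhammer (INR (S a)) l * (INR (S a) + INR l)). rewrite IH. rewrite Nat.add_succ_r, fact_S_INR.
    rewrite !S_INR, plus_INR. field. apply INR_fact_neq0.
Qed.

Lemma sum_ge_term (a : nat -> R) i K : (forall n, 0 <= a n) -> (i <= K)%nat -> a i <= sum_f_R0 a K.
Proof.
  intros Ha HiK. induction K as [|K IH].
  - assert (i = 0%nat) by lia. subst. simpl. lra.
  - simpl. destruct (Nat.eq_dec i (S K)) as [->|Hne].
    + pose proof (sum_nonneg a K Ha). lra.
    + pose proof (Ha (S K)). assert (a i <= sum_f_R0 a K) by (apply IH; lia). lra.
Qed.

Lemma cc_nonneg j i : 0 <= cc j i.
Proof.
  unfold cc. apply Rmult_le_pos. left; apply INR_fact_pos.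
  left; apply Rinv_0_lt_compat. apply Rmult_lt_0_compat.
  apply Rmult_lt_0_compat; apply INR_fact_pos. apply pow_lt; lra.
Qed.

Lemma gk_nonneg k x : 0 <= x -> 0 <= gk k x.
Proof.
  intros Hx. unfold gk. apply Rmult_le_pos. apply Rmult_le_pos. left; apply exp_pos.
  apply pow_le; lra. left; apply Rinv_0_lt_compat, Rmult_lt_0_compat. lra. apply INR_fact_pos.
Qed.

Lemma integrand_nonneg j k x : 0 <= x -> 0 <= E (S j) (x / 2) * gk k x.
Proof. intros Hx. apply Rmult_le_pos. apply E_nonneg; lra. apply gk_nonneg; auto. Qed.

Lemma cc_le_1 j k i : (i <= k)%nat -> cc j i <= 1.
Proof.
  intros Hik.
  assert (HT : 0 <= 1 - sum_f_R0 (cc j) k).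
  { pose proof (gen_mono _ 0 _ 0 (integrand_nonneg j k) (T_gen j k) (Rle_refl 0)).
    lra. }
  pose proof (sum_ge_term (cc j) i k (cc_nonneg j) Hik). lra.
Qed.

Lemma finite_sum_series (a : nat -> nat -> R) (l : nat -> R) K :
  (forall i, (i <= K)%nat -> is_series (fun m => a i m) (l i)) ->
  is_series (fun m => sum_f_R0 (fun i => a i m) K) (sum_f_R0 l K).
Proof.
  intros H. induction K as [|K IH]; simpl. apply H; lia.
  apply is_series_plus_R. apply IH. intros; apply H; lia. apply H; lia.
Qed.

Lemma is_series_ext_R (a b : nat -> R) (l : R) : (forall n, a n = b n) -> is_series a l -> is_series b l.
Proof. apply is_series_ext. Qed.

Definition Acoef (k i : nat) : R := pochhammer (INR (S k)) i / (INR (fact i) * 2 ^ (S k + i)).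

Definition hterm (k i : nat) (c : R) (m : nat) : R :=
  pochhammer (INR (S k + i)) m / pochhammer (INR (S k)) m * (c / 2) ^ m / INR (fact m).

Lemma term_identity k i c m :
  pm c m * cc (k + m) i = exp (- c) * Acoef k i * hterm k i c m.
Proof.
  unfold pm, cc, Acoef, hterm.
  replace (INR (S k + i)) with (INR (S (k + i))) by reflexivity.
  rewrite !poch_fact.
  replace (fact (k + m + i)) with (fact (k + i + m)) by (f_equal; lia).
  replace (S (k + m + i)) with (S k + i + m)%nat by lia.
  rewrite pow_add. unfold Rdiv. rewrite Rpow_mult_distr, pow_inv.
  pose proof (INR_fact_neq0 i). pose proof (INR_fact_neq0 k). pose proof (INR_fact_neq0 m).
  pose proof (INR_fact_neq0 (k + m)). pose proof (INR_fact_neq0 (k + i)).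
  assert (2 ^ m <> 0) by (apply pow_nonzero; lra).
  assert (2 ^ (S k + i) <> 0) by (apply pow_nonzero; lra).
  field. repeat split; auto.
Qed.

Lemma Acoef_pos k i : 0 < Acoef k i.
Proof.
  unfold Acoef. rewrite poch_fact. apply Rdiv_lt_0_compat.
  apply Rdiv_lt_0_compat; apply INR_fact_pos.
  apply Rmult_lt_0_compat. apply INR_fact_pos. apply pow_lt; lra.
Qed.

Lemma hyp_series k i c : 0 <= c -> (i <= k)%nat ->
  is_series (fun m => pm c m * cc (k + m) i)
    (exp (- c) * (Acoef k i * hyp1F1 (INR (S k + i)) (INR (S k)) (c / 2))).
Proof.
  intros Hc Hik.
  assert (Hex : ex_series (fun m => pm c m * cc (k + m) i)).
  { apply ex_series_pmE; auto. intros m. split. apply cc_nonneg. apply (cc_le_1 _ k); auto. }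
  set (Sx := Series (fun m => pm c m * cc (k + m) i)).
  assert (HS : is_series (fun m => pm c m * cc (k + m) i) Sx) by (apply Series_correct; auto).
  assert (HK : 0 < exp (- c) * Acoef k i) by (apply Rmult_lt_0_compat; [apply exp_pos | apply Acoef_pos]).
  assert (Hh : is_series (hterm k i c) (/ (exp (- c) * Acoef k i) * Sx)).
  { apply is_series_ext_R with (a := fun m => / (exp (- c) * Acoef k i) * (pm c m * cc (k + m) i)).
    intros m. rewrite term_identity.
    assert (exp (- c) <> 0) by (pose proof (exp_pos (- c)); lra).
    assert (Acoef k i <> 0) by (pose proof (Acoef_pos k i); lra).
    field; repeat split; auto.
    apply is_series_scal_R; auto. }
  assert (Hhyp : hyp1F1 (INR (S k + i)) (INR (S k)) (c / 2) = / (exp (- c) * Acoef k i) * Sx).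
  { unfold hyp1F1. apply is_series_unique. exact Hh. }
  rewrite Hhyp. replace (exp (- c) * (Acoef k i * (/ (exp (- c) * Acoef k i) * Sx))) with Sx.
  exact HS. field. split. pose proof (Acoef_pos k i); lra. pose proof (exp_pos (- c)); lra.
Qed.

Lemma exp_neg_le1 y : 0 <= y -> exp (- y) <= 1.
Proof.
  intros Hy. pose proof (exp_ineq1_le y). pose proof (exp_pos (- y)).
  assert (exp (- y) * exp y = 1) by (rewrite <- exp_plus; replace (- y + y) with 0 by ring; apply exp_0).
  nra.
Qed.

Lemma gk_bound k B x : 0 <= x <= B -> gk k x <= (B / 2) ^ k / (2 * INR (fact k)).
Proof.
  intros Hx. unfold gk. unfold Rdiv at 2 4.
  apply Rmult_le_compat_r. left; apply Rinv_0_lt_compat, Rmult_lt_0_compat. lra. apply INR_fact_pos.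
  assert (0 <= (x / 2) ^ k) by (apply pow_le; lra).
  assert ((x / 2) ^ k <= (B / 2) ^ k) by (apply pow_incr; lra).
  pose proof (exp_neg_le1 (x / 2) ltac:(lra)). pose proof (exp_pos (- (x / 2))).
  nra.
Qed.

Theorem corollary3 (N L : nat) (sigp2 N0 Y : R) :
  (1 <= N)%nat -> (1 <= L)%nat -> 0 < sigp2 -> 0 < N0 -> 0 <= Y ->
  is_RInt_gen (fun lam => - (Pd N L sigp2 N0 Y lam * Derive (Pf N L) lam))
    (at_point 0) (Rbar_locally p_infty)
    (1 - exp (- (INR L * sigp2 * Y / N0)) *
       sum_f_R0 (fun l =>
         pochhammer (INR (N * L)) l / (INR (fact l) * 2 ^ (N * L + l)) *
         hyp1F1 (INR (N * L + l)) (INR (N * L)) (INR L * sigp2 * Y / (2 * N0)))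
       (N * L - 1)).
Proof.
  intros HN HL Hs HN0 HY.
  assert (Hn : exists k, (N * L = S k)%nat) by (exists (N * L - 1)%nat; nia).
  destruct Hn as [k Hk].
  set (c := INR L * sigp2 * Y / N0).
  assert (Hc : 0 <= c).
  { unfold c. apply Rmult_le_pos. apply Rmult_le_pos. apply Rmult_le_pos. apply pos_INR. lra. lra.
    left; apply Rinv_0_lt_compat; lra. }
  assert (Hpf : forall lam, Pf N L lam = E (S k) (lam / 2)).
  { intros lam. unfold Pf. rewrite Hk, upper_gamma_eq, Gamma_nat_eq. field. apply INR_fact_neq0. }
  assert (Hdpf : forall lam, Derive (Pf N L) lam = - gk k lam).
  { intros lam. rewrite (Derive_ext (Pf N L) (fun l => E (S k) (l / 2))) by exact Hpf.
    apply is_derive_unique. eapply D_conv.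
    apply (D_comp (E (S k)) (fun l => l / 2)). apply E_derive.
    apply (D_mult (fun t => t) (fun _ => / 2)). apply D_id. apply D_const.
    unfold gk. field. apply INR_fact_neq0. }
  assert (Hpd : forall lam, Pd N L sigp2 N0 Y lam = marcumQ (S k) (sqrt (2 * c)) (sqrt lam)).
  { intros lam. unfold Pd. rewrite Hk. f_equal. f_equal. unfold c. field. lra. }
  rewrite Hk. replace (S k - 1)%nat with k by lia.
  replace (INR L * sigp2 * Y / (2 * N0)) with (c / 2) by (unfold c; field; lra).
  fold c.
  apply (interchange (fun m lam => pm c m * (E (S (k + m)) (lam / 2) * gk k lam)) _ (gk k) (pm c)
           (fun m => pm c m * (1 - sum_f_R0 (cc (k + m)) k)) 0 _ 1).
  - intros m x Hx. apply Rmult_le_pos. apply pm_nonneg; auto. apply integrand_nonneg; auto.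
  - intros m x Hx. apply Rmult_le_compat_l. apply pm_nonneg; auto.
    pose proof (gk_nonneg k x Hx). pose proof (E_le_1 (S (k + m)) (x / 2) ltac:(lra)).
    nra.
  - intros m. apply pm_nonneg; auto.
  - apply pm_series.
  - intros B. exists ((B / 2) ^ k / (2 * INR (fact k))). intros x Hx. apply gk_bound; auto.
  - intros x Hx. cbv beta. rewrite Hdpf, Hpd.
    replace (- (marcumQ (S k) (sqrt (2 * c)) (sqrt x) * - gk k x))
      with (gk k x * marcumQ (S k) (sqrt (2 * c)) (sqrt x)) by ring.
    apply is_series_ext_R with (a := fun m => gk k x * (pm c m * E (S (k + m)) (x / 2))).
    intros; ring.
    apply is_series_scal_R, marcum_series; auto.
  - intros m. apply (GEN_scal (fun lam => E (S (k + m)) (lam / 2) * gk k lam)). apply T_gen.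
  - apply is_series_ext_R with (a := fun m => pm c m - sum_f_R0 (fun i => pm c m * cc (k + m) i) k).
    intros m. rewrite sum_scal_l. ring.
    replace (1 - exp (- c) * sum_f_R0 (fun l => pochhammer (INR (S k)) l / (INR (fact l) * 2 ^ (S k + l)) *
               hyp1F1 (INR (S k + l)) (INR (S k)) (c / 2)) k)
      with (1 - sum_f_R0 (fun i => exp (- c) * (Acoef k i * hyp1F1 (INR (S k + i)) (INR (S k)) (c / 2))) k).
    2:{ rewrite sum_scal_l. reflexivity. }
    apply is_series_minus_R. apply pm_series.
    apply (finite_sum_series (fun i m => pm c m * cc (k + m) i)).
    intros i Hi. apply hyp_series; auto.
Qed.
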